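(* For every integer $m\ge0$, the polynomial $(-1)^m\,m!\,v_m(Y)\in R[Y]$ is $(bm+1)$-triangular (with respect to $U$) of degree $(ab-1)m+a$.
   Context: Let $a,b\ge2$ be integers and $u_0,\ldots,u_a$ variables; let $R=\mathbb{C}[u_0,\ldots,u_{a-1}][u_a,u_a^{-1}]$ and $U(Y)=\sum_{j=0}^au_jY^j\in R[Y]$. Let $I(Y,Z)\in R[[Z]][Y]$ be the formal inverse of $Y+ZU(Y)^b$, i.e. the unique element with $I(Y+ZU(Y)^b,Z)=Y$, and define $v_k(Y)\in R[Y]$ by $U(I(Y,Z))=\sum_{k\ge0}v_k(Y)Z^k$. $\mathbb{Q}_+$ denotes the positive rationals. For an integer $m\ge1$, a polynomial $P(Y)=\sum_{l=0}^dp_lY^l\in R[Y]$ of degree $d\ge a$ is called $m$-triangular (or $(m,U)$-triangular) if for every $l$ with $d-a\le l\le d$ one has $p_l=q_lu_a^{m-1}u_{a-d+l}+P_l(u_{a-d+l+1},\ldots,u_a)$ for some $q_l\in\mathbb{Q}_+$ and some polynomial $P_l\in\mathbb{C}[u_{a-d+l+1},\ldots,u_a]$ (for $l=d$ this means $p_d=q_du_a^m$). *)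

(* Defs.v *)
From HB Require Import structures.
From mathcomp Require Import all_boot all_order all_algebra.
From mathcomp Require Import reals complex mpoly.
Set Implicit Arguments. Unset Strict Implicit. Unset Printing Implicit Defensive.
Import GRing.Theory.
Local Open Scope ring_scope.

Section Defs.
Variables (Rr : realType) (a : nat).

Definition Cc : numClosedFieldType := Rr[i].

Definition Pol : idomainType := {mpoly Cc[a.+1]}.

(* Ambient field Frac(C[u_0..u_a]), in which R = C[u_0..u_{a-1}][u_a, u_a^-1]
   sits as the subring [inR] below. *)
Definition K : fieldType := {fraction Pol}.

Definition u (j : nat) : K := tofrac ('X_(inord j) : Pol).

Definition inR (x : K) : Prop :=
  exists (k : nat) (p : Pol), x = tofrac p / u a ^+ k.

Definition Upoly : {poly K} := \poly_(j < a.+1) u j.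

(* Elements of R[Y][[Z]] are sequences (I_k)_k of polynomials in Y:
   I(Y,Z) = sum_k I_k(Y) Z^k.  Finite truncations in Z are represented in
   {poly {poly K}}: the outer variable is Z, the inner one is Y. *)
Definition cst2 (c : K) : {poly {poly K}} := c%:P%:P.

(* p(Y + Z W(Y)) as a polynomial in Z with coefficients in K[Y]. *)
Definition substYZ (p W : {poly K}) : {poly {poly K}} :=
  (map_poly cst2 p).[('X : {poly K})%:P + W%:P * 'X].

(* I(Y + Z U(Y)^b, Z) = Y, coefficientwise in Z: the coefficient of Z^n of
   sum_k I_k(Y + Z U(Y)^b) Z^k only involves k <= n. *)
Definition is_formal_inverse (b : nat) (I : nat -> {poly K}) : Prop :=
  forall n : nat,
    (\sum_(k < n.+1) substYZ (I k) (Upoly ^+ b) * 'X^k)`_n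
      = (if n == 0%N then 'X else 0).

(* v_k(Y) = coefficient of Z^k in U(I(Y,Z)); it only depends on I_0..I_k. *)
Definition vcoef (I : nat -> {poly K}) (k : nat) : {poly K} :=
  ((map_poly cst2 Upoly).[\sum_(i < k.+1) (I i)%:P * 'X^i])`_k.

(* Index:
   a - d + l is written (a - (d - l))%N, which is correct for d-a <= l <= d.
   P_l in C[u_{a-d+l+1},...,u_a] means: no monomial of P_l involves u_i with
   i <= a-d+l.  For l = d the paper requires p_d = q_d u_a^M, i.e. P_d = 0. *)
Definition triangular (M d : nat) (P : {poly K}) : Prop :=
  (forall i, inR P`_i) /\ size P = d.+1 /\ (a <= d)%N /\
  forall l : nat, (d - a <= l <= d)%N ->
    exists q : rat, 0 < q /\
    exists Q : Pol,
      (forall mon, mon \in msupp Q ->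
         forall i : 'I_a.+1, (i <= a - (d - l))%N -> mon i = 0%N) /\
      (l = d -> Q = 0) /\
      P`_l = ratr q * u a ^+ M.-1 * u (a - (d - l)) + tofrac Q.

End Defs.

(* Main.v *)
Require Import Defs.
From HB Require Import structures.
From mathcomp Require Import all_boot all_order all_algebra.
From mathcomp Require Import reals complex mpoly.
From mathcomp Require Import ring zify.
Set Implicit Arguments. Unset Strict Implicit. Unset Printing Implicit Defensive.
Import GRing.Theory Num.Theory.
Local Open Scope ring_scope.

Section LagrangeA.
Variable F : fieldType.
Local Notation PF := {poly F}.
Local Notation T := {poly {poly F}}.

Definition c2 (c : F) : T := c%:P%:P.
Definition comp2 (f : PF) (X : T) : T := (map_poly c2 f).[X].
Definition cmp (Phi : T) := (comp_poly Phi) \o (map_poly (@polyC F)).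
Definition sig (Phi : T) := (horner_eval ('X : T)) \o (map_poly (cmp Phi)).

Lemma comp2E f X : comp2 f X = cmp X f.
Proof. by rewrite /comp2 /cmp /= /comp_poly -map_poly_comp. Qed.

Lemma comp2D f g X : comp2 (f + g) X = comp2 f X + comp2 g X.
Proof. rewrite !comp2E; exact: (rmorphD (cmp X)). Qed.
Lemma comp2N f X : comp2 (- f) X = - comp2 f X.
Proof. rewrite !comp2E; exact: (rmorphN (cmp X)). Qed.
Lemma comp2M f g X : comp2 (f * g) X = comp2 f X * comp2 g X.
Proof. rewrite !comp2E; exact: (rmorphM (cmp X)). Qed.
Lemma comp2Xn f n X : comp2 (f ^+ n) X = comp2 f X ^+ n.
Proof. rewrite !comp2E; exact: (rmorphXn (cmp X)). Qed.
Lemma comp2C c X : comp2 c%:P X = c%:P%:P.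
Proof. by rewrite comp2E /cmp /= map_polyC comp_polyC. Qed.
Lemma comp2X X : comp2 'X X = X.
Proof. by rewrite comp2E /cmp /= map_polyX comp_polyX. Qed.

Lemma deriv_comp2 f X : (comp2 f X)^`() = comp2 f^`() X * X^`().
Proof. by rewrite !comp2E /cmp /= deriv_comp deriv_map. Qed.

Lemma comp2_coef0 f X : (comp2 f X)`_0 = f \Po X`_0.
Proof.
rewrite comp2E /cmp /= /comp_poly.
have -> : forall q : T, q`_0 = coefp 0 q by [].
rewrite -horner_map /= -map_poly_comp.
congr (_.[_]); apply/polyP => i; rewrite !coef_map_id0 //= ?coefC // -map_poly_comp coef_map_id0 // coef0.
Qed.

Lemma comp2_XP f : comp2 f ('X%:P) = f%:P.
Proof.
rewrite comp2E /cmp /= comp_polyCr; congr polyC; exact: comp_polyXr.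
Qed.

Lemma comp2_0 X : comp2 0 X = 0.
Proof. by rewrite -[0]/(0%:P) comp2C. Qed.

Definition dY (p : T) : T := map_poly (@deriv F) p.

Lemma coef_dY p i : (dY p)`_i = (p`_i)^`().
Proof. by rewrite coef_map_id0 // deriv0. Qed.

Lemma dYD p q : dY (p + q) = dY p + dY q.
Proof. by apply/polyP=> i; rewrite coefD !coef_dY coefD derivD. Qed.
Lemma dYN p : dY (- p) = - dY p.
Proof. by apply/polyP=> i; rewrite coefN !coef_dY coefN derivN. Qed.
Lemma dYB p q : dY (p - q) = dY p - dY q.
Proof. by rewrite dYD dYN. Qed.
Lemma dYM p q : dY (p * q) = dY p * q + p * dY q.
Proof.
apply/polyP=> i; rewrite coef_dY coefD !coefM raddf_sum -big_split /=.
by apply: eq_bigr => j _; rewrite derivM !coef_dY.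
Qed.
Lemma dYC (c : PF) : dY c%:P = (c^`())%:P.
Proof. by apply/polyP=> i; rewrite coef_dY !coefC; case: eqP => // _; rewrite deriv0. Qed.
Lemma dYXn n : dY 'X^n = 0.
Proof.
apply/polyP=> i; rewrite coef_dY coefXn coef0; case: eqP => _.
  by rewrite -[1]/(1%:P) derivC.
by rewrite deriv0.
Qed.
Lemma dYX : dY 'X = 0.
Proof. by have := dYXn 1; rewrite expr1. Qed.
Lemma dYMXn p n : dY (p * 'X^n) = dY p * 'X^n.
Proof. by rewrite dYM dYXn mulr0 addr0. Qed.
Lemma dY0 : dY 0 = 0.
Proof. by rewrite /dY map_poly0. Qed.
Lemma dYexp p k : dY (p ^+ k.+1) = dY p * p ^+ k *+ k.+1.
Proof.
elim: k => [|k IH]; first by rewrite expr1 expr0 mulr1.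
rewrite exprS dYM IH mulrnAr mulrCA -exprS.
by rewrite [RHS]mulrS.
Qed.

Lemma dY_comp2 f X : dY (comp2 f X) = comp2 f^`() X * dY X.
Proof.
elim/poly_ind: f => [|f c IH]; first by rewrite deriv0 !comp2_0 dY0 mul0r.
rewrite derivMXaddC !comp2D !comp2M comp2X comp2C dYD dYM IH dYC derivC.
by rewrite polyC0 addr0 mulrDl addrC mulrAC.
Qed.

Lemma deriv_dY p : (dY p)^`() = dY p^`().
Proof. by apply/polyP=> i; rewrite coef_deriv !coef_dY coef_deriv derivMn. Qed.

Lemma deriv_iter k p : (iter k dY p)^`() = iter k dY p^`().
Proof. by elim: k => [|k IH] //; rewrite !iterS deriv_dY IH. Qed.

Lemma coef0_iter k p : (iter k dY p)`_0 = (p`_0)^`(k).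
Proof. by elim: k => [|k IH] //; rewrite iterS coef_dY IH derivnS. Qed.

Definition eqZ n (p q : T) := forall i, (i < n)%N -> p`_i = q`_i.

Lemma eqZ_refl n p : eqZ n p p. Proof. by []. Qed.
Lemma eqZ_sym n p q : eqZ n p q -> eqZ n q p.
Proof. by move=> h i hi; rewrite h. Qed.
Lemma eqZ_trans n p q r : eqZ n p q -> eqZ n q r -> eqZ n p r.
Proof. by move=> h1 h2 i hi; rewrite h1 ?h2. Qed.
Lemma eqZ_le m n p q : (m <= n)%N -> eqZ n p q -> eqZ m p q.
Proof. by move=> hmn h i hi; rewrite h // (leq_trans hi hmn). Qed.
Lemma eqZD n p q p' q' : eqZ n p q -> eqZ n p' q' -> eqZ n (p + p') (q + q').
Proof. by move=> h1 h2 i hi; rewrite !coefD h1 ?h2. Qed.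
Lemma eqZN n p q : eqZ n p q -> eqZ n (- p) (- q).
Proof. by move=> h i hi; rewrite !coefN h. Qed.
Lemma eqZB n p q p' q' : eqZ n p q -> eqZ n p' q' -> eqZ n (p - p') (q - q').
Proof. by move=> h1 h2; apply: eqZD => //; apply: eqZN. Qed.
Lemma eqZM n p q p' q' : eqZ n p q -> eqZ n p' q' -> eqZ n (p * p') (q * q').
Proof.
move=> h1 h2 i hi; rewrite !coefM; apply: eq_bigr => j _.
have hj := ltn_ord j.
rewrite h1 ?h2 //; first by apply: leq_ltn_trans hi; apply: leq_subr.
by apply: leq_ltn_trans hi.
Qed.
Lemma eqZ_dY n p q : eqZ n p q -> eqZ n (dY p) (dY q).
Proof. by move=> h i hi; rewrite !coef_dY h. Qed.
Lemma eqZ_deriv n p q : eqZ n.+1 p q -> eqZ n p^`() q^`().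
Proof. by move=> h i hi; rewrite !coef_deriv h. Qed.
Lemma eqZ_iter n k p q : eqZ n p q -> eqZ n (iter k dY p) (iter k dY q).
Proof. by elim: k => [|k IH] //= h; apply: eqZ_dY; apply: IH. Qed.
Lemma eqZ_comp2 n f X Y : eqZ n X Y -> eqZ n (comp2 f X) (comp2 f Y).
Proof.
move=> h; elim/poly_ind: f => [|f c IH]; first by rewrite !comp2_0.
rewrite !comp2D !comp2M !comp2X !comp2C; apply: eqZD; [exact: eqZM | exact: eqZ_refl].
Qed.
Lemma eqZ_eq n p q : p = q -> eqZ n p q.
Proof. by move=> ->. Qed.


Lemma eqZMn n k p q : eqZ n p q -> eqZ n (p *+ k) (q *+ k).
Proof. by move=> h i hi; rewrite !coefMn h. Qed.
Lemma eqZ_sub n p q : eqZ n (p - q) 0 -> eqZ n p q.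
Proof. by move=> h i hi; apply/eqP; rewrite -subr_eq0 -coefB h // coef0. Qed.

Lemma take1 (g : T) : take_poly 1 g = (g`_0)%:P.
Proof. by apply/polyP => i; rewrite coef_take_poly coefC; case: i. Qed.

Lemma sigM Phi p q : sig Phi (p * q) = sig Phi p * sig Phi q.
Proof. exact: (rmorphM (sig Phi)). Qed.
Lemma sigD Phi p q : sig Phi (p + q) = sig Phi p + sig Phi q.
Proof. exact: (rmorphD (sig Phi)). Qed.
Lemma sigB Phi p q : sig Phi (p - q) = sig Phi p - sig Phi q.
Proof. exact: (rmorphB (sig Phi)). Qed.
Lemma sigXn Phi p n : sig Phi (p ^+ n) = sig Phi p ^+ n.
Proof. exact: (rmorphXn (sig Phi)). Qed.
Lemma sig0 Phi : sig Phi 0 = 0.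
Proof. exact: (rmorph0 (sig Phi)). Qed.
Lemma sig_sum Phi n (G : 'I_n -> T) : sig Phi (\sum_(i < n) G i) = \sum_(i < n) sig Phi (G i).
Proof. exact: (rmorph_sum (sig Phi)). Qed.
Lemma sig_horner Phi (p : {poly T}) x : sig Phi p.[x] = (map_poly (sig Phi) p).[sig Phi x].
Proof. by rewrite (horner_map (sig Phi)). Qed.

Lemma sig_polyC Phi (c : PF) : sig Phi c%:P = comp2 c Phi.
Proof. by rewrite /sig /= (map_polyC (cmp Phi)) horner_evalE hornerC comp2E. Qed.
Lemma sig_X Phi : sig Phi 'X = 'X.
Proof. by rewrite /sig /= (map_polyX (cmp Phi)) horner_evalE hornerX. Qed.
Lemma sig_XP Phi : sig Phi ('X%:P) = Phi.
Proof. by rewrite sig_polyC comp2X. Qed.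
Lemma sig_c2 Phi c : sig Phi (c2 c) = c2 c.
Proof. by rewrite /c2 sig_polyC comp2C. Qed.
Lemma sig_MXn Phi p n : sig Phi (p * 'X^n) = sig Phi p * 'X^n.
Proof. by rewrite sigM sigXn sig_X. Qed.
Lemma sig_comp2 Phi f X : sig Phi (comp2 f X) = comp2 f (sig Phi X).
Proof.
rewrite /comp2 sig_horner; congr (_.[_]).
apply/polyP => i; rewrite !coef_map_id0 //=.
  by rewrite sig_c2.
by rewrite sig0.
Qed.

Lemma coef0_sig (Phi g : T) : Phi`_0 = 'X -> (sig Phi g)`_0 = g`_0.
Proof.
move=> h0; rewrite -{1}(poly_take_drop 1 g) take1 sigD sig_MXn.
by rewrite sig_polyC coefD coefMXn /= addr0 comp2_coef0 h0 comp_polyXr.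
Qed.

Lemma sig_inj (Phi : T) n (g : T) : Phi`_0 = 'X -> eqZ n (sig Phi g) 0 -> eqZ n g 0.
Proof.
move=> h0; elim: n g => [|n IH] g h; first by move=> i.
have g0 : g`_0 = 0 by rewrite -(coef0_sig g h0) (h 0 isT) coef0.
have eg : g = drop_poly 1 g * 'X^1.
  by rewrite -{1}(poly_take_drop 1 g) take1 g0 polyC0 add0r.
move: h; rewrite eg sig_MXn => h.
have h' : eqZ n (sig Phi (drop_poly 1 g)) 0.
  by move=> i hi; have := h i.+1; rewrite ltnS => /(_ hi); rewrite coefMXn /= subn1 /= !coef0.
have hd := IH _ h'.
move=> i hi; rewrite coefMXn coef0; case: i hi => [|i] hi //=.
rewrite ltnS in hi; by rewrite subn1 /= (hd i hi) coef0.
Qed.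

Lemma coef0_exp (p : T) k : (p ^+ k)`_0 = (p`_0) ^+ k.
Proof. by elim: k => [|k IH]; rewrite ?expr0 ?coefC // !exprS coef0M IH. Qed.

Section Main.
Variables (U W : PF) (I : nat -> PF).
Let Phi : T := 'X%:P + W%:P * 'X.
Hypothesis hI : forall n,
  (\sum_(k < n.+1) comp2 (I k) Phi * 'X^k)`_n = if n == 0%N then 'X else 0.

Lemma Phi0 : Phi`_0 = 'X.
Proof. by rewrite /Phi coefD coefC coefMX /= addr0. Qed.

Lemma I0 : I 0 = 'X.
Proof. by have := hI 0; rewrite big_ord1 expr0 mulr1 comp2_coef0 Phi0 comp_polyXr. Qed.

Definition Xs m : T := \sum_(i < m.+1) (I i)%:P * 'X^i.

Lemma Xs0 m : (Xs m)`_0 = 'X.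
Proof.
rewrite /Xs coef_sum big_ord_recl /= expr0 mulr1 coefC /= I0 big1 ?addr0 //.
by move=> i _; rewrite coefMXn.
Qed.

Lemma R0 m : eqZ m.+1 (sig Phi (Xs m)) ('X%:P).
Proof.
move=> i hi.
rewrite -[RHS](_ : (\sum_(k < i.+1) comp2 (I k) Phi * 'X^k)`_i = _); last first.
  by rewrite hI coefC.
rewrite /Xs sig_sum !coef_sum.
rewrite (big_ord_widen m.+1 (fun k => (comp2 (I k) Phi * 'X^k)`_i) hi) [RHS]big_mkcond /=.
apply: eq_bigr => k _; rewrite sig_MXn sig_polyC; case: ifP => // /negbT.
by rewrite -leqNgt => hk; rewrite coefMXn hk.
Qed.

Lemma R1 m : eqZ m.+1 (Xs m + 'X * comp2 W (Xs m)) ('X%:P).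
Proof.
apply: eqZ_sub; apply: (sig_inj Phi0).
rewrite sigB sigD sigM sig_X sig_comp2 sig_XP.
apply: (@eqZ_trans _ _ ('X%:P + 'X * comp2 W ('X%:P) - Phi)).
  apply: eqZB; last exact: eqZ_refl.
  apply: eqZD; first exact: R0.
  apply: eqZM; first exact: eqZ_refl.
  apply: eqZ_comp2; exact: R0.
apply: eqZ_eq; rewrite comp2_XP /Phi [W%:P * _]mulrC; exact: subrr.
Qed.


Lemma E1 m : eqZ m.+1 ((1 + 'X * comp2 W^`() (Xs m)) * dY (Xs m)) 1.
Proof.
have := eqZ_dY (@R1 m).
rewrite dYD dYM dYX mul0r add0r dY_comp2 dYC derivX polyC1 => h.
apply: eqZ_trans h; apply: eqZ_eq.
by rewrite mulrDl mul1r mulrA.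
Qed.

Lemma E2 m : eqZ m ((1 + 'X * comp2 W^`() (Xs m)) * (Xs m)^`() + comp2 W (Xs m)) 0.
Proof.
have := eqZ_deriv (@R1 m).
rewrite derivD derivM derivX deriv_comp2 derivC => h.
apply: eqZ_trans h; apply: eqZ_eq.
by rewrite mulrDl mul1r mul1r mulrA addrA [_ + comp2 W _]addrC addrA [comp2 W _ + _]addrC.
Qed.

Lemma E3 m : eqZ m (Xs m)^`() (- (comp2 W (Xs m) * dY (Xs m))).
Proof.
set X := Xs m; set A := 1 + 'X * comp2 W^`() X; set H := comp2 W X.
have e : X^`() = (A * X^`() + H) * dY X - H * dY X + X^`() * (1 - A * dY X).
  by rewrite mulrDl addrK mulrBr mulr1 mulrA [X^`() * A]mulrC addrC subrK.
rewrite e; apply: (@eqZ_trans _ _ (0 * dY X - H * dY X + X^`() * 0)); last first.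
  by apply: eqZ_eq; rewrite mul0r mulr0 addr0 add0r.
apply: eqZD.
  apply: eqZB; last exact: eqZ_refl.
  apply: eqZM; [exact: (@E2 m) | exact: eqZ_refl].
apply: eqZM; first exact: eqZ_refl.
apply: (@eqZ_trans _ _ (1 - 1)); last by apply: eqZ_eq; rewrite subrr.
apply: eqZB; first exact: eqZ_refl.
exact: (eqZ_le (leqnSn m) (@E1 m)).
Qed.

Lemma E4 m f : eqZ m (comp2 f (Xs m))^`() (comp2 (- W) (Xs m) * dY (comp2 f (Xs m))).
Proof.
rewrite deriv_comp2 dY_comp2 comp2N.
apply: eqZ_trans (eqZM (@eqZ_refl m (comp2 f^`() (Xs m))) (@E3 m)) _.
by apply: eqZ_eq; rewrite mulrN mulNr mulrCA.
Qed.

Lemma Claim m k : (k < m)%N ->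
  eqZ (m - k) ((comp2 U (Xs m))^`(k.+1))
    (iter k dY (comp2 (- W) (Xs m) ^+ k.+1 * dY (comp2 U (Xs m)))).
Proof.
set X := Xs m; set G := comp2 U X; set Hn := comp2 (- W) X.
have eH : eqZ m Hn^`() (Hn * dY Hn) := @E4 m (- W).
have eG : eqZ m G^`() (Hn * dY G) := @E4 m U.
elim: k => [|k IH] hk.
  by rewrite subn0 derivn1 expr1.
have hk' : (k < m)%N by apply: ltnW.
have e : (m - k = (m - k.+1).+1)%N by rewrite subnS prednK // subn_gt0.
have := IH hk'; rewrite e => /eqZ_deriv; rewrite -derivnS deriv_iter => h.
apply: eqZ_trans h _; rewrite iterSr; apply: eqZ_iter.
have hle : (m - k.+1 <= m)%N by apply: leq_subr.
rewrite derivM deriv_exp deriv_dY dYM dYexp /=.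
apply: (@eqZ_trans _ _ ((Hn * dY Hn) * Hn ^+ k *+ k.+1 * dY G + Hn ^+ k.+1 * dY (Hn * dY G))).
  apply: eqZD.
    apply: eqZM; last exact: eqZ_refl.
    apply: eqZMn; apply: eqZM; last exact: eqZ_refl.
    exact: eqZ_le hle eH.
  apply: eqZM; first exact: eqZ_refl.
  apply: eqZ_dY; exact: eqZ_le hle eG.
apply: eqZ_eq; rewrite dYM.
rewrite !exprS; ring.
Qed.

Lemma lagrange m : (0 < m)%N ->
  (comp2 U (Xs m))`_m *+ m`! = ((- W) ^+ m * U^`())^`(m.-1).
Proof.
move=> hm; have := @Claim m m.-1; rewrite prednK // => /(_ (ltnSn _)).
rewrite -(ltn_predK hm) subSn // subnn => h; have := h 0%N isT.
rewrite (ltn_predK hm) coef_derivn addn0 ffactnn coef0_iter coef0M coef0_exp.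
by rewrite coef_dY !comp2_coef0 Xs0 !comp_polyXr.
Qed.

Lemma lagrange_final b m : W = U ^+ b ->
  (((-1) ^+ m * (m`!)%:R) *: (comp2 U (Xs m))`_m) *+ (b * m + 1) =
  (U ^+ (b * m + 1))^`(m).
Proof.
move=> hW; case: m => [|m].
  by rewrite expr0 mul1r muln0 /= comp2_coef0 Xs0 comp_polyXr scale1r add0n expr1.
rewrite -scalerA scaler_nat lagrange // [(- W) ^+ _]exprNn hW [m.+1.-1]/=.
rewrite -mulrA -[(-1 : PF) ^+ m.+1]signr_odd -[(-1 : F) ^+ m.+1]signr_odd mulr_sign scaler_sign.
rewrite derivSn deriv_exp addn1 [(_.+1).-1]/= exprM derivnMn.
by case: (odd m.+1); rewrite ?derivnN ?opprK mulrC.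
Qed.

End Main.
End LagrangeA.
Section PartB.
Variables (Rr : realType) (a : nat).
Local Notation Pol := (Pol Rr a).
Local Notation K := (K Rr a).
Definition xv (j : nat) : Pol := 'X_(inord j).
Definition Up : {poly Pol} := \poly_(j < a.+1) xv j.

Definition Sv (t : nat) (p : Pol) : Prop :=
  forall mon, mon \in msupp p -> forall i : 'I_a.+1, (i <= t)%N -> mon i = 0%N.

Lemma Sv0 t : Sv t 0.
Proof. by move=> mon; rewrite -mpolyC0 msupp0. Qed.
Lemma SvD t p q : Sv t p -> Sv t q -> Sv t (p + q).
Proof.
move=> hp hq mon /msuppD_le; rewrite mem_cat => /orP [] h; [exact: hp | exact: hq].
Qed.
Lemma SvM t p q : Sv t p -> Sv t q -> Sv t (p * q).
Proof.
move=> hp hq mon /msuppM_le /allpairsP [[m1 m2] /= [h1 h2 ->]] i hi.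
by rewrite mnmDE (hp _ h1) ?(hq _ h2).
Qed.
Lemma SvC t c : Sv t c%:MP.
Proof.
move=> mon; rewrite msuppC; case: eqP => _; first by rewrite in_nil.
by rewrite mem_seq1 => /eqP -> i _; rewrite mnm0E.
Qed.
Lemma SvX t j : (t < j <= a)%N -> Sv t (xv j).
Proof.
move=> /andP [htj hja] mon; rewrite /xv msuppX mem_seq1 => /eqP -> i hi.
rewrite mnm1E; case: eqP => // hE; exfalso.
have ej : j = i by rewrite -hE inordK // ltnS.
by move: hi; rewrite -ej leqNgt htj.
Qed.
Lemma Sv_le t t' p : (t' <= t)%N -> Sv t p -> Sv t' p.
Proof. by move=> h hp mon hm i hi; apply: hp => //; apply: leq_trans h. Qed.
Lemma SvMn t p n : Sv t p -> Sv t (p *+ n).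
Proof. by move=> hp; rewrite -mulr_natr -mpolyC_nat; apply: SvM => //; apply: SvC. Qed.
Lemma SvZ t c p : Sv t p -> Sv t (c *: p).
Proof. by move=> hp mon /msuppZ_le; apply: hp. Qed.
Lemma SvXn t p n : Sv t p -> Sv t (p ^+ n).
Proof.
move=> hp; elim: n => [|n IH]; first by rewrite expr0 -[1 : Pol](@mpolyC1 a.+1 (Cc Rr)); apply: SvC.
by rewrite exprS; apply: SvM.
Qed.

Lemma xv_neq0 j : xv j != 0.
Proof. by rewrite -msupp_eq0 /xv msuppX. Qed.

Lemma coef_Up j : Up`_j = if (j < a.+1)%N then xv j else 0.
Proof. by rewrite coef_poly. Qed.
Lemma size_Up : size Up = a.+1.
Proof. by rewrite size_poly_eq // xv_neq0. Qed.
Lemma Up_neq0 : Up != 0.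
Proof. by rewrite -size_poly_eq0 size_Up. Qed.
Lemma size_UpN N : size (Up ^+ N) = (a * N).+1.
Proof.
have := size_exp Up N; rewrite size_Up /= => h; rewrite -h prednK //.
by rewrite lt0n size_poly_eq0 expf_neq0 // Up_neq0.
Qed.
Lemma lead_UpN N : (Up ^+ N)`_(a * N) = xv a ^+ N.
Proof.
have := lead_coef_exp Up N; rewrite !lead_coefE size_UpN size_Up /= => ->.
by rewrite coef_Up ltnSn.
Qed.
Lemma UpN_hi N j : (a * N < j)%N -> (Up ^+ N)`_j = 0.
Proof. by move=> h; rewrite nth_default // size_UpN. Qed.


Lemma coefMUp (P : {poly Pol}) i : (a <= i)%N ->
  (P * Up)`_i = \sum_(j < a.+1) xv j * P`_(i - j).
Proof.
move=> hi; rewrite /Up poly_def mulr_sumr coef_sum; apply: eq_bigr => j _.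
rewrite -scalerAr coefZ coefMXn ltnNge (leq_trans _ hi) //.
by rewrite -ltnS ltn_ord.
Qed.

Lemma coefUpN N k : (0 < N)%N -> (0 < k <= a)%N ->
  exists Q, Sv (a - k) Q /\
    (Up ^+ N)`_(a * N - k) = N%:R * xv a ^+ N.-1 * xv (a - k) + Q.
Proof.
elim: N k => [//|N IH] k _ /andP [hk0 hka].
case: N IH => [|N] IH.
  exists 0; split; first exact: Sv0.
  by rewrite expr1 coef_Up muln1 ltnS leq_subr expr0 mulr1 mul1r addr0.
set P := Up ^+ N.+1.
have ha : (a <= a * N.+2 - k)%N by rewrite !mulnS; lia.
rewrite exprSr coefMUp //.
have hne : (inord (a - k) : 'I_a.+1) != ord_max.
  apply/eqP => /(congr1 val); rewrite /= inordK; first by lia.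
  by rewrite ltnS leq_subr.
rewrite (bigD1 ord_max) //= (bigD1 (inord (a - k))) //=.
rewrite inordK; last by rewrite ltnS leq_subr.
have [Q1 [hQ1 eQ1]] := IH k isT (introT andP (conj hk0 hka)).
have e1 : (a * N.+2 - k - a = a * N.+1 - k)%N by rewrite !mulnS; lia.
have e2 : (a * N.+2 - k - (a - k) = a * N.+1)%N by rewrite !mulnS; lia.
rewrite e1 e2 eQ1 lead_UpN.
set R := \sum_(j < a.+1 | _) _.
have hR : Sv (a - k) R.
  apply: big_ind; [exact: Sv0 | exact: SvD |] => j /andP [hj1 hj2].
  have hja : (j < a)%N.
    by have := ltn_ord j; rewrite ltnS leq_eqVlt => /orP [/eqP hj|//]; case/eqP: hj1; apply: val_inj.
  have hjk : (val j != a - k)%N.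
    by apply/eqP => hj; case/eqP: hj2; apply: val_inj; rewrite /= inordK // ltnS leq_subr.
  have [hlt|hgt] := ltnP j (a - k).
    by rewrite UpN_hi ?mulr0; [exact: Sv0 | rewrite !mulnS; lia].
  have hgt' : (a - k < j)%N by rewrite ltn_neqAle eq_sym hjk hgt.
  have hk' : (0 < j + k - a <= a)%N by apply/andP; split; lia.
  have [Q2 [hQ2 eQ2]] := IH (j + k - a)%N isT hk'.
  have e3 : (a * N.+2 - k - j = a * N.+1 - (j + k - a))%N by rewrite !mulnS; lia.
  rewrite e3 eQ2; apply: SvM; first by apply: SvX; rewrite hgt' /= ltnW.
  apply: SvD; last by apply: Sv_le hQ2; lia.
  apply: SvM; last by apply: SvX; apply/andP; split; lia.
  apply: SvM; first by rewrite -mpolyC_nat; apply: SvC.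
  by apply: SvXn; apply: SvX; apply/andP; split; lia.
exists (xv a * Q1 + R); split.
  apply: SvD => //; apply: SvM => //; apply: SvX; apply/andP; split => //; lia.
rewrite /= exprS; ring.
Qed.

End PartB.

Section Final.
Variables (Rr : realType) (a : nat).
Local Notation Pol := (Pol Rr a).
Local Notation K := (K Rr a).

Lemma Upoly_map : Upoly Rr a = map_poly (@tofrac Pol) (Up Rr a).
Proof.
apply/polyP => j; rewrite coef_map /Upoly coef_poly coef_Up.
by case: ifP => _ //; rewrite tofrac0.
Qed.

Lemma size_eqS (p : {poly Pol}) d : (forall j, (d < j)%N -> p`_j = 0) -> p`_d != 0 ->
  size p = d.+1.
Proof.
move=> h1 h2; apply/eqP; rewrite eqn_leq; apply/andP; split.
  by apply/leq_sizeP => j hj; apply: h1.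
by rewrite ltnNge; apply/negP => /leq_sizeP /(_ d (leqnn d)) h; rewrite h eqxx in h2.
Qed.

Lemma natPol_neq0 n : (0 < n)%N -> (n%:R : Pol) != 0.
Proof. by move=> hn; rewrite -mpolyC_nat mpolyC_eq0 pnatr_eq0 -lt0n. Qed.

Lemma tofrac_inj_Pol : injective (@tofrac Pol).
Proof. by move=> x y /eqP; rewrite tofrac_eq => /eqP. Qed.

Lemma triangular_of (b m : nat) (ha : (1 <= a)%N) (hb : (1 <= b)%N) (P : {poly K}) :
  P *+ (b * m + 1) = (Upoly Rr a ^+ (b * m + 1))^`(m) ->
  triangular (b * m + 1) ((a * b - 1) * m + a) P.
Proof.
move=> hPN.
set N := (b * m + 1)%N; set d := ((a * b - 1) * m + a)%N.
have hN0 : (0 < N)%N by rewrite /N addn1.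
have hab : (1 <= a * b)%N by rewrite muln_gt0 ha hb.
have haN : (a * N = d + m)%N.
  rewrite /N /d mulnDr muln1 mulnA mulnBl mul1n.
  have : (m <= a * b * m)%N by rewrite leq_pmull.
  lia.
have hNC : (N%:R : Cc Rr) != 0 by rewrite pnatr_eq0 -lt0n.
set cN : Pol := ((N%:R : Cc Rr)^-1)%:MP.
have cNN : cN * N%:R = 1.
  by rewrite -mpolyC_nat -mpolyCM mulVf // mpolyC1.
have hcN0 : cN != 0 by rewrite mpolyC_eq0 invr_eq0.
have htc : tofrac cN = (N%:R : K)^-1.
  have hNK : (N%:R : K) != 0 by rewrite -(rmorph_nat (@tofrac Pol)) tofrac_eq0 natPol_neq0.
  apply: (mulIf hNK); rewrite mulVf // -(rmorph_nat (@tofrac Pol)) -tofracM cNN tofrac1.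
  done.
set D := (Up Rr a ^+ N)^`(m).
set P0 := cN *: D.
have hP : P = map_poly (@tofrac Pol) P0.
  have hNK : (N%:R : K) != 0 by rewrite -(rmorph_nat (@tofrac Pol)) tofrac_eq0 natPol_neq0.
  apply: (scalerI hNK); rewrite !scaler_nat hPN Upoly_map.
  rewrite -(rmorphXn (map_poly (@tofrac Pol))) derivn_map -(rmorphMn (map_poly (@tofrac Pol))); congr (map_poly _ _).
  by rewrite /P0 scalerMnl -mulr_natr cNN scale1r.
have coefP i : P`_i = tofrac (cN * ((Up Rr a ^+ N)`_(m + i) *+ (m + i) ^_ m)).
  by rewrite hP coef_map coefZ coef_derivn.
split.
  by move=> i; exists 0%N, (cN * D`_i); rewrite expr0 divr1 hP coef_map coefZ.
split.
  rewrite hP size_map_inj_poly; [|exact: tofrac_inj_Pol|exact: tofrac0].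
  rewrite size_scale //; apply: size_eqS.
    by move=> j hj; rewrite coef_derivn UpN_hi ?mul0rn //; lia.
  rewrite coef_derivn addnC -haN lead_UpN -mulr_natl mulf_neq0 //.
    by apply: natPol_neq0; rewrite ffact_gt0; lia.
  by rewrite expf_neq0 // xv_neq0.
split; first by rewrite /d leq_addl.
move=> l /andP [hl1 hl2].
set k := (d - l)%N.
have hk : (k <= a)%N by rewrite /k; lia.
have eml : (m + l = a * N - k)%N by rewrite /k; lia.
have hff : (0 < (m + l) ^_ m)%N by rewrite ffact_gt0; lia.
rewrite coefP; set ff := ((m + l) ^_ m)%N; rewrite eml.
have eN : N.-1 = (b * m)%N by rewrite /N addn1.
have hq : ratr (ff%:R / N%:R : rat) = tofrac (((ff%:R / N%:R : Cc Rr))%:MP) :> K.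
  have := fmorph_rat ((@tofrac Pol) \o (@mpolyC a.+1 (Cc Rr))) (ff%:R / N%:R).
  by rewrite /= => <-; rewrite (fmorph_div (@ratr (Cc Rr))) !rmorph_nat.
have [hk0|hk0] := posnP k.
  exists ((ff%:R / N%:R : rat)); split.
    by rewrite divr_gt0 // ltr0n.
  exists 0; split; first by move=> mon; rewrite -mpolyC0 msupp0.
  split => //.
  rewrite hk0 !subn0 lead_UpN tofrac0 addr0 hq -mulrA -exprSr prednK //.
  rewrite mulrnAr -mulrnAl -mpolyCMn tofracM tofracXn.
  by rewrite [(ff%:R : Cc Rr) / _]mulrC mulr_natr.
have hka : (0 < k <= a)%N by rewrite hk0 hk.
have [Q0 [hQ0 eQ0]] := @coefUpN Rr a N k hN0 hka.
exists (ff%:R); split; first by rewrite ltr0n.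
exists (cN * (Q0 *+ ff)); split.
  by apply: SvM; [exact: SvC | exact: SvMn].
split.
  by move=> hl; move: hk0; rewrite /k hl subnn.
rewrite eQ0 mulrnDl mulrDr tofracD -/N eN; congr (_ + _).
rewrite -mulrnAr !mulrA cNN mul1r tofracM tofracXn tofracMn ratr_nat.
by rewrite mulrnAr -[LHS]mulr_natl mulrA.
Qed.

End Final.

Unset Implicit Arguments.

Theorem mainTheorem9 (Rr : realType) (a b : nat) (ha : (2 <= a)%N) (hb : (2 <= b)%N)
  (I : nat -> {poly K Rr a})
  (hIR : forall k i, inR ((I k)`_i))
  (hI : is_formal_inverse b I) :
  forall m : nat,
    triangular (b * m + 1) ((a * b - 1) * m + a)
      (((-1) ^+ m * (m`!)%:R) *: vcoef I m).
Proof.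
move=> m.
apply: triangular_of; [by apply: leq_trans ha | by apply: leq_trans hb |].
exact: (@lagrange_final _ (Upoly Rr a) (Upoly Rr a ^+ b) I hI b m erefl).
Qed.
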